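(* Let $\mathfrak{s}$ be a binary word over $\{\mathsf{A},\mathsf{B}\}$ that is either empty or ends with the letter $\mathsf{B}$, and let $n\ge 0$ be an integer. Then \[ \max_{|\mathfrak{t}|=n} \mathsf{P}(\mathfrak{s}\circ\mathfrak{t}) = \mathsf{P}(\mathfrak{s}\circ\mathfrak{z}_n), \] where the maximum is over all binary words $\mathfrak{t}$ of length $n$. Moreover, if $\mathfrak{s}$ is nonempty, then $\mathfrak{t}=\mathfrak{z}_n$ is the only word of length $n$ attaining this maximum.
   Context: $\circ$ denotes concatenation, $|\mathfrak{t}|$ the length of $\mathfrak{t}$. $\mathsf{P}(\mathfrak{w})$ is the number of distinct words that are subsequences (not necessarily contiguous) of $\mathfrak{w}$, the empty word included. $\mathfrak{z}_n$ denotes the alternating word $\mathsf{ABAB}\ldots$ of length $n$ starting with $\mathsf{A}$ (so $\mathfrak{z}_0$ is empty). *)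

(* Defs.v *)
From mathcomp Require Import all_boot.
Set Implicit Arguments. Unset Strict Implicit. Unset Printing Implicit Defensive.

Definition letA : bool := false.
Definition letB : bool := true.

Fixpoint subseqs (w : seq bool) : seq (seq bool) :=
  match w with
  | [::] => [:: [::]]
  | x :: w' => subseqs w' ++ map (cons x) (subseqs w')
  end.

Definition P (w : seq bool) : nat := size (undup (subseqs w)).

(* z_n = ABAB... of length n, starting with A. *)
Definition z (n : nat) : seq bool := mkseq (fun i => odd i) n.

(* Main.v *)
Require Import Defs.
From mathcomp Require Import all_boot.
From mathcomp Require Import zify.

Lemma inj_cons (c : bool) : injective (cons c).
Proof. by move=> a b [->]. Qed.

Definition L (w : seq bool) := undup (subseqs w).

Lemma mem_subseqs w u : (u \in subseqs w) = subseq u w.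
Proof.
elim: w u => [|x w IH] u /=; first by rewrite inE; case: u.
rewrite mem_cat IH; case: u => [|y v] /=; first by rewrite sub0seq.
case: (eqVneq y x) => [->|nyx].
  rewrite (mem_map (@inj_cons x)) IH; apply/orP/idP => [[H|//]|]; last by right.
  by apply: subseq_trans H; apply: subseq_cons.
have -> : (y :: v \in [seq x :: i | i <- subseqs w]) = false.
  by apply/negP => /mapP [b _ [E _]]; rewrite E eqxx in nyx.
by rewrite orbF.
Qed.

Lemma mem_L w u : (u \in L w) = subseq u w.
Proof. by rewrite mem_undup mem_subseqs. Qed.

Lemma uniq_L w : uniq (L w).
Proof. exact: undup_uniq. Qed.

Definition hd_is (c : bool) (u : seq bool) := ohead u == Some c.

Definition cnt c w := count (hd_is c) (L w).

Lemma P_cnt w : P w = (cnt false w + cnt true w).+1.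
Proof.
rewrite /P -/(L w) /cnt.
rewrite -(count_predC (fun u : seq bool => u == [::])).
have -> : count (fun u : seq bool => u == [::]) (L w) = 1.
  by rewrite (count_uniq_mem _ (uniq_L w)) mem_L sub0seq.
rewrite add1n; congr S.
rewrite -count_predUI.
rewrite (@eq_count _ (predI _ _) pred0); last by case=> [|[] v].
rewrite count_pred0 addn0; apply: eq_count; by case=> [|[] v].
Qed.


Lemma cnt_same c w : cnt c (c :: w) = P w.
Proof.
rewrite /cnt -size_filter /P -/(L w).
rewrite -(size_map (cons c) (L w)); apply: perm_size; apply: uniq_perm.
- by rewrite filter_uniq ?uniq_L.
- by rewrite map_inj_uniq ?uniq_L //; apply: inj_cons.
case=> [|y v].
  rewrite mem_filter /=; symmetry; apply/negP => /mapP [b _] //.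
rewrite mem_filter mem_L /hd_is /=.
case: (eqVneq y c) => [->|nyc].
  by rewrite eqxx mem_map ?mem_L //; apply: inj_cons.
have -> : (Some y == Some c) = false by apply/negP => /eqP [E]; rewrite E eqxx in nyc.
symmetry; apply/negP => /mapP [b _ [E _]]; by rewrite E eqxx in nyc.
Qed.

Lemma cnt_other c w : cnt (~~ c) (c :: w) = cnt (~~ c) w.
Proof.
rewrite /cnt -!size_filter; apply: perm_size; apply: uniq_perm.
- by rewrite filter_uniq ?uniq_L.
- by rewrite filter_uniq ?uniq_L.
case=> [|y v]; rewrite !mem_filter //= !mem_L /hd_is /=.
case: (eqVneq y (~~ c)) => [->|]; last by move=> /negbTE H; case: (Some y == Some (~~c)) / eqP => // [[E]]; rewrite E eqxx in H.
by case: c.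
Qed.

Definition pp w := (cnt false w).+1.
Definition qq w := (cnt true w).+1.

Lemma P_pq w : (P w).+1 = pp w + qq w.
Proof. by rewrite P_cnt /pp /qq; lia. Qed.

Lemma pq_false w : pp (false :: w) = pp w + qq w /\ qq (false :: w) = qq w.
Proof.
rewrite /pp /qq cnt_same (cnt_other false) P_cnt /=; split; lia.
Qed.

Lemma pq_true w : pp (true :: w) = pp w /\ qq (true :: w) = pp w + qq w.
Proof.
rewrite /pp /qq cnt_same (cnt_other true) P_cnt /=; split; lia.
Qed.

Fixpoint val (t : seq bool) (p q : nat) : nat :=
  match t with
  | [::] => p + q
  | false :: t' => val t' (p + q) q
  | true :: t' => val t' p (p + q)
  end.

Lemma val_rev t r : (P (rev t ++ r)).+1 = val t (pp r) (qq r).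
Proof.
elim: t r => [|c t IH] r /=; first by rewrite P_pq.
rewrite rev_cons cat_rcons IH.
by case: c; [case: (pq_true r) => -> -> | case: (pq_false r) => -> ->].
Qed.

Lemma P_rev w : P (rev w) = P w.
Proof.
rewrite /P -!/(L _) -(size_map rev (L w)); apply: perm_size; apply: uniq_perm.
- exact: uniq_L.
- by rewrite map_inj_uniq ?uniq_L //; apply: (can_inj (@revK _)).
move=> u; rewrite -{2}(revK u) mem_map; last exact: (can_inj (@revK _)).
by rewrite !mem_L -subseq_rev revK.
Qed.

Lemma val_mono t x y x' y' : x <= x' -> y <= y' -> val t x y <= val t x' y'.
Proof.
elim: t x y x' y' => [|[] t IH] x y x' y' hx hy /=; first lia.
- by apply: IH => //; lia.
- by apply: IH => //; lia.
Qed.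

Lemma val_strict t x y x' y' : x < x' -> y <= y' -> val t x y < val t x' y'.
Proof.
elim: t x y x' y' => [|[] t IH] x y x' y' hx hy /=; first lia.
- by apply: IH => //; lia.
- by apply: IH => //; lia.
Qed.

Lemma val_neg t x y : val (map negb t) x y = val t y x.
Proof.
elim: t x y => [|[] t IH] x y /=; first lia.
- by rewrite IH addnC.
- by rewrite IH addnC.
Qed.

Lemma z_S n : z n.+1 = false :: map negb (z n).
Proof.
rewrite /z /mkseq /=; congr cons.
have -> : iota 1 n = map (addn 1) (iota 0 n) by rewrite -(iotaDl 1 0).
rewrite -!map_comp; by apply: eq_map => i /=.
Qed.

Lemma size_z n : size (z n) = n.
Proof. by rewrite /z size_mkseq. Qed.

Lemma main n : forall p q, 0 < p -> p <= q ->
  forall t, size t = n ->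
    val t p q <= val (z n) p q /\ (p < q -> val t p q = val (z n) p q -> t = z n).
Proof.
elim: n => [|n IH] p q hp hpq t ht.
  by case: t ht => // _; split.
case: t ht => [|c t] // [ht].
rewrite z_S /= val_neg.
have hmono : val (z n) p (p + q) <= val (z n) q (p + q) by apply: val_mono.
case: c => /=.
- have [H1 _] := IH p (p + q) hp (leq_addr _ _) t ht.
  split; first exact: leq_trans H1 hmono.
  move=> hlt E.
  have : val (z n) p (p + q) < val (z n) q (p + q) by apply: val_strict.
  lia.
- have ht' : size (map negb t) = n by rewrite size_map.
  have hq : 0 < q by lia.
  have [H1 H2] := IH q (p + q) hq (leq_addl _ _) _ ht'.
  rewrite -val_neg; split => //.
  move=> _ E; have E2 := H2 (ltac:(lia)) E.
  by rewrite -[t](mapK negbK) E2.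
Qed.

Theorem theorem3 (s : seq bool) (n : nat) :
  (s = [::] \/ last letA s = letB) ->
  (forall t : seq bool, size t = n -> P (s ++ t) <= P (s ++ z n)) /\
  (s <> [::] ->
     forall t : seq bool, size t = n -> P (s ++ t) = P (s ++ z n) -> t = z n).
Proof.
move=> hs.
have hpq : pp (rev s) <= qq (rev s) /\ (s <> [::] -> pp (rev s) < qq (rev s)).
  case: hs => [-> | hl]; first by split => //.
  case/lastP: s hl => [|s' x] /=; first by [].
  rewrite last_rcons => ->; rewrite rev_rcons.
  case: (pq_true (rev s')) => -> ->; split; [lia | move=> _; rewrite /qq; lia].
case: hpq => hle hlt.
have hp : 0 < pp (rev s) by [].
have key : forall t, (P (s ++ t)).+1 = val t (pp (rev s)) (qq (rev s)).
  by move=> t; rewrite -P_rev rev_cat -val_rev.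
split.
- move=> t ht; have [H _] := @main n _ _ hp hle t ht.
  by move: H; rewrite -!key ltnS.
- move=> hne t ht E; have [_ H] := @main n _ _ hp hle t ht.
  by apply: H (hlt hne) _; rewrite -!key E.
Qed.
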